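(* Let $k\ge1$, let $R_1,\dots,R_k\in\mathcal R$, and let $n_1,\dots,n_k\in\mathbb N$ with $n_k=\max(n_1,\dots,n_k)$. Put $A=\pi_{n_1}^{-1}(R_1)\cap\dots\cap\pi_{n_k}^{-1}(R_k)\subset\widehat P$. Then $A=\pi_{n_k}^{-1}(B)$ for some simple set $B\subset P$.
   Context: Let $I=[-1,1]$ and $J=(1,2]$. For $t\in J$ let $f_t\colon I\to I$ be the core tent map $f_t(x)=\min\big(t(x-1)+3,\ t(1-x)-1\big)$. Let $P=I\times J$ and $F\colon P\to P$, $F(x,t)=(f_t(x),t)$. For a compact metric space $X$ and continuous surjection $g\colon X\to X$, the inverse limit is $\varprojlim(X,g)=\{\mathbf x=\langle x_0,x_1,\dots\rangle\in X^{\mathbb N}: g(x_{n+1})=x_n\ \forall n\}$ with the product topology (metric $d(\mathbf x,\mathbf y)=\sum_n d(x_n,y_n)/2^n$), and $\pi_n(\mathbf x)=x_n$. Let $\widehat P=\varprojlim(P,F)$ with projections $\pi_n\colon\widehat P\to P$. For $X\subset P$ write $X^{(t)}=X\cap(I\times\{t\})$. A tilted rectangle is a subset of $\mathbb R^2$ obtained by rotating an open (possibly empty) rectangle $(a_1,a_2)\times(b_1,b_2)$ by $\pi/4$; $\mathcal R$ is the set of tilted rectangles contained in $P$. A subset $B\subset P$ is simple if it is open in $P$ and $(\partial B)^{(t)}$ is finite for each $t\in J$. *)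

(* Defs.v *)
From Stdlib Require Import Reals Lra List.
Open Scope R_scope.

Definition pt := (R * R)%type.

Definition inI (x : R) : Prop := -1 <= x <= 1.
Definition inJ (t : R) : Prop := 1 < t <= 2.
Definition inP (p : pt) : Prop := inI (fst p) /\ inJ (snd p).

Definition tent (t x : R) : R := Rmin (t * (x - 1) + 3) (t * (1 - x) - 1).

Definition Fmap (p : pt) : pt := (tent (snd p) (fst p), snd p).

(* Points of the inverse limit  \hat P = lim_<- (P, F) : threads x with
   x_n in P and F(x_{n+1}) = x_n for all n. *)
Definition inPhat (xs : nat -> pt) : Prop :=
  forall n, inP (xs n) /\ Fmap (xs (S n)) = xs n.

Definition dist2 (p q : pt) : R :=
  sqrt ((fst p - fst q) ^ 2 + (snd p - snd q) ^ 2).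

Definition rot4 (p : pt) : pt :=
  (cos (PI / 4) * fst p - sin (PI / 4) * snd p,
   sin (PI / 4) * fst p + cos (PI / 4) * snd p).

Definition tilted_rect (S : pt -> Prop) : Prop :=
  exists a1 a2 b1 b2 : R,
    forall p, S p <-> exists u v, a1 < u < a2 /\ b1 < v < b2 /\ p = rot4 (u, v).

Definition in_calR (S : pt -> Prop) : Prop :=
  tilted_rect S /\ (forall p, S p -> inP p).

Definition openP (B : pt -> Prop) : Prop :=
  (forall p, B p -> inP p) /\
  forall p, B p -> exists eps, eps > 0 /\
    forall q, inP q -> dist2 p q < eps -> B q.

Definition closureP (B : pt -> Prop) (p : pt) : Prop :=
  inP p /\ forall eps, eps > 0 -> exists q, B q /\ dist2 p q < eps.

Definition interiorP (B : pt -> Prop) (p : pt) : Prop :=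
  B p /\ exists eps, eps > 0 /\ forall q, inP q -> dist2 p q < eps -> B q.

Definition boundaryP (B : pt -> Prop) (p : pt) : Prop :=
  closureP B p /\ ~ interiorP B p.

Definition simple_set (B : pt -> Prop) : Prop :=
  openP B /\
  forall t, inJ t -> exists l : list R, forall x, boundaryP B (x, t) -> In x l.

(* Main.v *)
Require Import Defs.
From Stdlib Require Import Reals Lra Lia List Classical.
Open Scope R_scope.

Fixpoint Fm (m : nat) (p : pt) : pt := match m with O => p | S m => Fmap (Fm m p) end.

Lemma Fm_snd m p : snd (Fm m p) = snd p.
Proof. induction m; simpl; auto. Qed.

Lemma Fm_S' m p : Fm (S m) p = Fm m (Fmap p).
Proof. induction m; simpl; auto. simpl in IHm. rewrite IHm. reflexivity. Qed.

Lemma tent_I t x : inJ t -> inI x -> inI (tent t x).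
Proof. unfold inJ, inI, tent, Rmin; intros; destruct (Rle_dec _ _); split; nra. Qed.

Lemma Fm_P m p : inP p -> inP (Fm m p).
Proof. induction m; simpl; auto. intros H. specialize (IHm H). destruct IHm.
 split; simpl; auto. apply tent_I; auto. Qed.

Lemma thread xs : inPhat xs -> forall d j, xs j = Fm d (xs (j + d)%nat).
Proof. intros H d; induction d; intros j.
 - rewrite Nat.add_0_r; reflexivity.
 - rewrite IHd. rewrite Fm_S'. replace (j + S d)%nat with (S (j + d)) by lia.
   destruct (H (j+d)%nat) as [_ E]. rewrite E. reflexivity. Qed.

Lemma Rmin_lip a b a' b' E : Rabs (a - a') <= E -> Rabs (b - b') <= E ->
  Rabs (Rmin a b - Rmin a' b') <= E.
Proof. unfold Rmin; intros; destruct (Rle_dec a b), (Rle_dec a' b'); split_Rabs; lra. Qed.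

Lemma Rabs_btw a b : Rabs a <= b -> -b <= a <= b.
Proof. split_Rabs; lra. Qed.

Lemma tent_lip tp tq xp xq D : inJ tp -> inJ tq -> inI xp -> inI xq ->
  Rabs (xp - xq) <= D -> Rabs (tp - tq) <= D -> Rabs (tent tp xp - tent tq xq) <= 4 * D.
Proof. unfold inJ, inI, tent; intros Hp Hq Hx Hy H1 H2.
 apply Rmin_lip; apply Rabs_le; apply Rabs_btw in H1; apply Rabs_btw in H2.
 all: split; nra. Qed.

Lemma Fm_lip m p q D : inP p -> inP q -> Rabs (fst p - fst q) <= D -> Rabs (snd p - snd q) <= D ->
  Rabs (fst (Fm m p) - fst (Fm m q)) <= 4 ^ m * D /\ Rabs (snd (Fm m p) - snd (Fm m q)) <= 4 ^ m * D.
Proof. intros Hp Hq H1 H2. assert (D0 : 0 <= D) by (pose proof (Rabs_pos (fst p - fst q)); lra).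
 induction m.
 - simpl; lra.
 - destruct IHm as [I1 I2]. pose proof (Fm_P m p Hp) as [A1 A2]. pose proof (Fm_P m q Hq) as [B1 B2].
   simpl. rewrite !Fm_snd in *. split.
   + replace (4 * 4 ^ m * D) with (4 * (4 ^ m * D)) by ring. apply tent_lip; auto.
   + assert (0 <= 4 ^ m * D) by (apply Rmult_le_pos; auto; apply pow_le; lra). nra. Qed.

Definition box (a b c d : R) (r : pt) : Prop :=
  a < fst r + snd r < b /\ c < snd r - fst r < d.

Lemma tilted_box S : tilted_rect S -> exists a b c d, forall r, S r <-> box a b c d r.
Proof.
 intros [a1 [a2 [b1 [b2 H]]]].
 set (c := cos (PI/4)).
 assert (Hs : sin (PI/4) = c) by (unfold c; rewrite sin_PI4, cos_PI4; reflexivity).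
 assert (Hc : 0 < c) by (unfold c; rewrite cos_PI4; apply Rdiv_lt_0_compat; [lra| apply sqrt_lt_R0; lra]).
 exists (2*c*a1), (2*c*a2), (2*c*b1), (2*c*b2). intros r. rewrite H. unfold box, rot4. rewrite Hs. fold c.
 split.
 - intros [u [v [Hu [Hv E]]]]. subst r. simpl. split; split; nra.
 - intros [[H1 H2] [H3 H4]]. exists ((fst r + snd r)/(2*c)), ((snd r - fst r)/(2*c)).
   split; [|split].
   + split; [apply Rmult_lt_reg_r with (2*c); [lra|]; field_simplify; lra | ].
     apply Rmult_lt_reg_r with (2*c); [lra|]. field_simplify; lra.
   + split; [apply Rmult_lt_reg_r with (2*c); [lra|]; field_simplify; lra | ].
     apply Rmult_lt_reg_r with (2*c); [lra|]. field_simplify; lra.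
   + destruct r as [x y]; simpl. f_equal; field; lra.
Qed.

Lemma dist_fst p q : Rabs (fst p - fst q) <= dist2 p q.
Proof. unfold dist2. rewrite <- sqrt_Rsqr_abs. apply sqrt_le_1_alt. unfold Rsqr.
 pose proof (pow2_ge_0 (snd p - snd q)). lra. Qed.
Lemma dist_snd p q : Rabs (snd p - snd q) <= dist2 p q.
Proof. unfold dist2. rewrite <- sqrt_Rsqr_abs. apply sqrt_le_1_alt. unfold Rsqr.
 pose proof (pow2_ge_0 (fst p - fst q)). lra. Qed.

Definition phi (r : pt) := fst r + snd r.
Definition psi (r : pt) := snd r - fst r.

Lemma lipG m p q : inP p -> inP q ->
  Rabs (phi (Fm m q) - phi (Fm m p)) <= 2 * 4 ^ m * dist2 p q /\
  Rabs (psi (Fm m q) - psi (Fm m p)) <= 2 * 4 ^ m * dist2 p q.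
Proof. intros Hp Hq.
 destruct (Fm_lip m p q (dist2 p q) Hp Hq (dist_fst p q) (dist_snd p q)) as [A B].
 apply Rabs_btw in A; apply Rabs_btw in B. unfold phi, psi. split; apply Rabs_le; split; lra. Qed.

Lemma lip_open (h : pt -> R) K p a b : 0 < K ->
  (forall q, inP q -> Rabs (h q - h p) <= K * dist2 p q) -> a < h p < b ->
  exists e, e > 0 /\ forall q, inP q -> dist2 p q < e -> a < h q < b.
Proof. intros HK Hl Hab. exists (Rmin (h p - a) (b - h p) / K). split.
 - apply Rdiv_lt_0_compat; auto. apply Rmin_pos; lra.
 - intros q Hq Hd. specialize (Hl q Hq). apply Rabs_btw in Hl.
   assert (K * dist2 p q < Rmin (h p - a) (b - h p)).
   { apply Rmult_lt_reg_r with (/K). apply Rinv_0_lt_compat; auto.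
     replace (K * dist2 p q * / K) with (dist2 p q) by (field; lra). exact Hd. }
   pose proof (Rmin_l (h p - a) (b - h p)); pose proof (Rmin_r (h p - a) (b - h p)). lra. Qed.

Lemma lip_closed (h : pt -> R) K p a b : 0 < K ->
  (forall q, inP q -> Rabs (h q - h p) <= K * dist2 p q) ->
  (forall e, e > 0 -> exists q, inP q /\ a < h q < b /\ dist2 p q < e) -> a <= h p <= b.
Proof. intros HK Hl Hc. split; apply Rnot_lt_le; intro Hlt.
 - destruct (Hc ((a - h p)/K)) as [q [Hq [Hab Hd]]]. apply Rdiv_lt_0_compat; lra.
   specialize (Hl q Hq). apply Rabs_btw in Hl.
   assert (K * dist2 p q < a - h p).
   { apply Rmult_lt_reg_r with (/K). apply Rinv_0_lt_compat; auto.
     replace (K * dist2 p q * / K) with (dist2 p q) by (field; lra).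
     replace ((a - h p) * / K) with ((a - h p)/K) by (field; lra). exact Hd. }
   lra.
 - destruct (Hc ((h p - b)/K)) as [q [Hq [Hab Hd]]]. apply Rdiv_lt_0_compat; lra.
   specialize (Hl q Hq). apply Rabs_btw in Hl.
   assert (K * dist2 p q < h p - b).
   { apply Rmult_lt_reg_r with (/K). apply Rinv_0_lt_compat; auto.
     replace (K * dist2 p q * / K) with (dist2 p q) by (field; lra).
     replace ((h p - b) * / K) with ((h p - b)/K) by (field; lra). exact Hd. }
   lra.
Qed.

Lemma K_pos m : 0 < 2 * 4 ^ m.
Proof. pose proof (pow_lt 4 m). lra. Qed.

Lemma box_open m a b c d p : inP p -> box a b c d (Fm m p) ->
  exists e, e > 0 /\ forall q, inP q -> dist2 p q < e -> box a b c d (Fm m q).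
Proof. intros Hp [H1 H2].
 destruct (lip_open (fun q => phi (Fm m q)) (2*4^m) p a b (K_pos m)) as [e1 [E1 F1]]; auto.
 { intros q Hq. apply (lipG m p q Hp Hq). }
 destruct (lip_open (fun q => psi (Fm m q)) (2*4^m) p c d (K_pos m)) as [e2 [E2 F2]]; auto.
 { intros q Hq. apply (lipG m p q Hp Hq). }
 exists (Rmin e1 e2). split. apply Rmin_pos; auto.
 intros q Hq Hd. pose proof (Rmin_l e1 e2); pose proof (Rmin_r e1 e2).
 split; [apply (F1 q Hq)| apply (F2 q Hq)]; lra. Qed.

Lemma box_closed m a b c d p : inP p ->
  (forall e, e > 0 -> exists q, inP q /\ box a b c d (Fm m q) /\ dist2 p q < e) ->
  a <= phi (Fm m p) <= b /\ c <= psi (Fm m p) <= d.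
Proof. intros Hp Hc. split.
 - apply (lip_closed (fun q => phi (Fm m q)) (2*4^m) p a b (K_pos m)).
   intros q Hq. apply (lipG m p q Hp Hq).
   intros e He. destruct (Hc e He) as [q [Hq [[B1 B2] Hd]]]. exists q; auto.
 - apply (lip_closed (fun q => psi (Fm m q)) (2*4^m) p c d (K_pos m)).
   intros q Hq. apply (lipG m p q Hp Hq).
   intros e He. destruct (Hc e He) as [q [Hq [[B1 B2] Hd]]]. exists q; auto.
Qed.

Definition pre (t : R) (l : list R) : list R :=
  flat_map (fun c => (1 + (c - 3)/t) :: (1 - (c + 1)/t) :: nil) l.
Fixpoint prei (t : R) (m : nat) (l : list R) : list R :=
  match m with O => l | S m => prei t m (pre t l) end.

Lemma pre_spec t x l : 0 < t -> In (tent t x) l -> In x (pre t l).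
Proof. intros Ht H. unfold pre. apply in_flat_map. exists (tent t x). split; auto.
 unfold tent, Rmin. destruct (Rle_dec _ _).
 - left. field; lra.
 - right; left. field; lra. Qed.

Lemma prei_spec t m : 0 < t -> forall p l, snd p = t -> In (fst (Fm m p)) l -> In (fst p) (prei t m l).
Proof. intros Ht; induction m; intros p l Hs H; simpl in *; auto.
 apply IHm; auto. apply pre_spec; auto. rewrite Fm_snd in H. rewrite Hs in H. exact H. Qed.

Lemma comp_finite m a b c d t : inJ t -> exists l, forall x,
  inP (x, t) ->
  (forall e, e > 0 -> exists q, inP q /\ box a b c d (Fm m q) /\ dist2 (x,t) q < e) ->
  ~ box a b c d (Fm m (x,t)) -> In x l.
Proof. intros Ht.
 exists (prei t m ((a - t) :: (b - t) :: (t - c) :: (t - d) :: nil)).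
 intros x Hp Hc Hn. destruct (box_closed m a b c d (x,t) Hp Hc) as [[A1 A2] [A3 A4]].
 change x with (fst (x,t)). apply prei_spec; [unfold inJ in Ht; lra | reflexivity |].
 unfold phi, psi in *. rewrite Fm_snd in *. simpl snd in *.
 set (y := fst (Fm m (x,t))) in *. unfold box in Hn. rewrite Fm_snd in Hn. simpl snd in Hn. fold y in Hn.
 simpl.
 destruct (Req_dec (y + t) a). left; lra.
 destruct (Req_dec (y + t) b). right; left; lra.
 destruct (Req_dec (t - y) c). right; right; left; lra.
 destruct (Req_dec (t - y) d). right; right; right; left; lra.
 exfalso; apply Hn; lra. Qed.

Lemma fin_eps (k : nat) (C : nat -> pt -> Prop) (p : pt) :
  (forall i, (i < k)%nat -> exists e, e > 0 /\ forall q, inP q -> dist2 p q < e -> C i q) ->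
  exists e, e > 0 /\ forall q, inP q -> dist2 p q < e -> forall i, (i < k)%nat -> C i q.
Proof. induction k; intros H.
 - exists 1. split; [lra|]. intros; lia.
 - destruct IHk as [e1 [E1 F1]]. { intros; apply H; lia. }
   destruct (H k (Nat.lt_succ_diag_r k)) as [e2 [E2 F2]].
   exists (Rmin e1 e2); split. apply Rmin_pos; auto.
   intros q Hq Hd i Hi. pose proof (Rmin_l e1 e2); pose proof (Rmin_r e1 e2).
   destruct (Nat.eq_dec i k). subst; apply F2; auto; lra. apply F1; auto; try lra; lia. Qed.

Lemma fin_list (k : nat) (C : nat -> R -> Prop) :
  (forall i, (i < k)%nat -> exists l : list R, forall x, C i x -> In x l) ->
  exists l : list R, forall x, (exists i, (i < k)%nat /\ C i x) -> In x l.
Proof. induction k; intros H.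
 - exists nil. intros x [i [Hi _]]; lia.
 - destruct IHk as [l1 F1]. { intros; apply H; lia. }
   destruct (H k (Nat.lt_succ_diag_r k)) as [l2 F2].
   exists (l1 ++ l2). intros x [i [Hi Hc]]. apply in_or_app.
   destruct (Nat.eq_dec i k). subst; right; auto. left; apply F1; exists i; split; auto; lia. Qed.

Theorem mainTheorem2 (k : nat) (Rs : nat -> pt -> Prop) (n : nat -> nat)
  (hk : (1 <= k)%nat)
  (hR : forall i, (i < k)%nat -> in_calR (Rs i))
  (hmax : forall i, (i < k)%nat -> (n i <= n (k - 1)%nat)%nat) :
  exists B : pt -> Prop,
    simple_set B /\
    forall xs, inPhat xs ->
      ((forall i, (i < k)%nat -> Rs i (xs (n i))) <-> B (xs (n (k - 1)%nat))).
Proof.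
 set (N := n (k - 1)%nat).
 set (B := fun p => inP p /\ forall i, (i < k)%nat -> Rs i (Fm (N - n i) p)).
 assert (Hopen : openP B).
 { split. intros p [Hp _]; auto.
   intros p [Hp HB].
   destruct (fin_eps k (fun i q => Rs i (Fm (N - n i) q)) p) as [e [He F]].
   { intros i Hi. destruct (hR i Hi) as [Ht _]. destruct (tilted_box _ Ht) as [a [b [c [d Hbx]]]].
     destruct (box_open (N - n i) a b c d p Hp) as [e [He F]]. apply Hbx; auto.
     exists e; split; auto. intros q Hq Hd. apply Hbx; auto. }
   exists e; split; auto. intros q Hq Hd. split; auto. }
 exists B. split.
 - split; auto. intros t Ht.
   destruct (fin_list k (fun i x => inP (x, t) /\
       (forall e, e > 0 -> exists q, B q /\ dist2 (x,t) q < e) /\ ~ Rs i (Fm (N - n i) (x,t)))) as [l Hl].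
   { intros i Hi. destruct (hR i Hi) as [Htr _]. destruct (tilted_box _ Htr) as [a [b [c [d Hbx]]]].
     destruct (comp_finite (N - n i) a b c d t Ht) as [l Hl]. exists l.
     intros x [Hp [Hc Hn]]. apply Hl; auto.
     - intros e He. destruct (Hc e He) as [q [[Hq Bq] Hd]]. exists q. split; auto. split; auto.
       apply Hbx. apply Bq; auto.
     - intro Hb. apply Hn. apply Hbx. auto. }
   exists l. intros x [[Hp Hc] Hni]. apply Hl.
   assert (~ B (x,t)).
   { intro Hb. apply Hni. split; auto. apply (proj2 Hopen); auto. }
   apply NNPP. intro Hno. apply H. split; auto. intros i Hi.
   apply NNPP. intro Hr. apply Hno. exists i. split; auto.
 - intros xs Hxs. assert (HP : inP (xs N)) by apply (proj1 (Hxs N)).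
   assert (Ht : forall i, (i < k)%nat -> xs (n i) = Fm (N - n i) (xs N)).
   { intros i Hi. rewrite (thread xs Hxs (N - n i) (n i)). f_equal. f_equal.
     specialize (hmax i Hi). unfold N. lia. }
   split.
   + intros H. split; auto. intros i Hi. rewrite <- Ht; auto.
   + intros [_ H] i Hi. rewrite Ht; auto.
Qed.
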